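(* For a subset $C\subseteq L$, the following are equivalent: (i) $C$ is $\mathbf{u}$-compatible; (ii) there exists a (not necessarily straight) road map $(\{H^\alpha_p\},\{V^\beta_q\})$ such that for every $k=1,\dots,r$, $$C|_k\subseteq\Big(\bigcup_{p=1}^{u_{\mathrm{t}(h_k)}}H^{\mathrm{t}(h_k)}_p|_k\Big)\cap\Big(\bigcup_{q=1}^{u_{\mathrm{s}(h_k)}}V^{\mathrm{s}(h_k)}_q|_k\Big).$$
   Context: Let $\mathcal{Q}$ be a bipartite quiver with vertex set $V_{\mathcal{Q}}=V_{\rm source}\sqcup V_{\rm target}$ and arrows $h_1,\dots,h_r$, each $h_k$ from $\mathrm{s}(h_k)\in V_{\rm source}$ to $\mathrm{t}(h_k)\in V_{\rm target}$. Let $\mathbf{m}=(m_\gamma)$, $\mathbf{u}=(u_\gamma)$ be tuples of nonnegative integers indexed by $V_{\mathcal{Q}}$. For $k=1,\dots,r$ let $X^{(k)}$ be an $m_{\mathrm{t}(h_k)}\times m_{\mathrm{s}(h_k)}$ matrix of variables $x^{(k)}_{ij}$; page $k$ is the grid $[1,m_{\mathrm{t}(h_k)}]\times[1,m_{\mathrm{s}(h_k)}]$. For $\alpha\in V_{\rm target}$ with $r_1<\dots<r_s$ the indices of arrows with target $\alpha$, $A_\alpha=[X^{(r_1)}|\cdots|X^{(r_s)}]$; for $\beta\in V_{\rm source}$ with $r'_1<\dots<r'_t$ the indices of arrows with source $\beta$, $A_\beta$ is the stack of $X^{(r'_1)},\dots,X^{(r'_t)}$ top to bottom. $a_\gamma\times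 b_\gamma$ is the size of $A_\gamma$; $v_\alpha=\sum_{k:\mathrm{t}(h_k)=\alpha}u_{\mathrm{s}(h_k)}$, $v_\beta=\sum_{k:\mathrm{s}(h_k)=\beta}u_{\mathrm{t}(h_k)}$. Standing assumption: $0<u_\gamma\le\min(a_\gamma,b_\gamma)$, $u_\alpha\le v_\alpha$, $u_\beta\le v_\beta$. $L=\{(i,j,k)\in\mathbb{Z}^3:1\le k\le r,\ (i,j)\text{ in page }k\}$; for $C\subseteq L$, $C|_k=\{(i,j):(i,j,k)\in C\}$. $\phi_\gamma$ sends a position $(p,q)$ of $A_\gamma$ to $(i,j,k)$ if that entry is $x^{(k)}_{ij}$; $C^\gamma=\phi_\gamma^{-1}(C)$. Coordinates $(i,j)$: $i$ row (downward, north = decreasing $i$), $j$ column (eastward). A diagonal chain of size $s$ is $\{(i_1,j_1),\dots,(i_s,j_s)\}$ with $i_1<\dots<i_s$, $j_1<\dots<j_s$. $C$ is $\mathbf{u}$-compatible if no $C^\gamma$ contains a diagonal chain of size $u_\gamma+1$. A path is a lattice path with unit steps going east $(0,1)$ or north $(-1,0)$ from its SW endpoint to its NE endpoint; nonintersecting = no shared vertex. A road map consists of, for each $\alpha\in V_{\rm target}$, nonintersecting paths $H^\alpha_1,\dots,H^\alpha_{u_\alpha}$ in the grid of $A_\alpha$, $H^\alpha_p$ with endpoints $(a_\alpha-u_\alpha+p,1)$, $(p,b_\alpha)$, and for each $\beta\in V_{\rm source}$ nonintersecting paths $V^\beta_1,\dots,V^\beta_{u_\beta}$ in the grid of $A_\beta$,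 $V^\beta_q$ with endpoints $(1,b_\beta-u_\beta+q)$, $(a_\beta,q)$. For a path $H$ in $A_\gamma$, $H|_k$ denotes the set of its lattice points lying in the block of page $k$, written in page-$k$ coordinates. *)

(* Defs.v *)
From mathcomp Require Import all_boot.
Set Implicit Arguments. Unset Strict Implicit. Unset Printing Implicit Defensive.

(* A bipartite quiver: source vertices 'I_nsrc, target vertices 'I_ntgt,
   arrows h_1..h_r indexed by 'I_narr (arrow k+1 of the paper is k : 'I_narr;
   the order of arrows is the order of 'I_narr). *)
Record bquiver := BQuiver {
  nsrc : nat; ntgt : nat; narr : nat;
  src : 'I_narr -> 'I_nsrc;
  tgt : 'I_narr -> 'I_ntgt }.

Section Defs.
Variables (Q : bquiver)
  (ms : 'I_(nsrc Q) -> nat) (mt : 'I_(ntgt Q) -> nat)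
  (us : 'I_(nsrc Q) -> nat) (ut : 'I_(ntgt Q) -> nat).

(* sizes: A_alpha is aT alpha x bT alpha, A_beta is aS beta x bS beta *)
Definition aT (a : 'I_(ntgt Q)) : nat := mt a.
Definition bT (a : 'I_(ntgt Q)) : nat := \sum_(k < narr Q | tgt k == a) ms (src k).
Definition aS (b : 'I_(nsrc Q)) : nat := \sum_(k < narr Q | src k == b) mt (tgt k).
Definition bS (b : 'I_(nsrc Q)) : nat := ms b.
Definition vT (a : 'I_(ntgt Q)) : nat := \sum_(k < narr Q | tgt k == a) us (src k).
Definition vS (b : 'I_(nsrc Q)) : nat := \sum_(k < narr Q | src k == b) ut (tgt k).

(* column offset of block k inside A_{t(h_k)}, row offset of block k inside A_{s(h_k)} *)
Definition offT (k : 'I_(narr Q)) : nat :=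
  \sum_(k' < narr Q | (k' < k) && (tgt k' == tgt k)) ms (src k').
Definition offS (k : 'I_(narr Q)) : nat :=
  \sum_(k' < narr Q | (k' < k) && (src k' == src k)) mt (tgt k').

Definition in_page (k : 'I_(narr Q)) (i j : nat) : Prop :=
  1 <= i <= mt (tgt k) /\ 1 <= j <= ms (src k).

(* subsets of L, as predicates on triples (i, j, k) *)
Definition subL (C : nat -> nat -> 'I_(narr Q) -> Prop) : Prop :=
  forall i j k, C i j k -> in_page k i j.

Definition phiT (a : 'I_(ntgt Q)) (p q i j : nat) (k : 'I_(narr Q)) : Prop :=
  tgt k = a /\ in_page k i j /\ p = i /\ q = offT k + j.
Definition phiS (b : 'I_(nsrc Q)) (p q i j : nat) (k : 'I_(narr Q)) : Prop :=
  src k = b /\ in_page k i j /\ p = offS k + i /\ q = j.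

Definition CT (C : nat -> nat -> 'I_(narr Q) -> Prop) (a : 'I_(ntgt Q)) (x : nat * nat) : Prop :=
  exists i j k, C i j k /\ phiT a x.1 x.2 i j k.
Definition CS (C : nat -> nat -> 'I_(narr Q) -> Prop) (b : 'I_(nsrc Q)) (x : nat * nat) : Prop :=
  exists i j k, C i j k /\ phiS b x.1 x.2 i j k.

Definition has_diag_chain (D : nat * nat -> Prop) (s : nat) : Prop :=
  exists c : seq (nat * nat),
    size c = s /\ sorted (fun x y => (x.1 < y.1) && (x.2 < y.2)) c /\
    forall x, x \in c -> D x.

Definition u_compatible (C : nat -> nat -> 'I_(narr Q) -> Prop) : Prop :=
  (forall a, ~ has_diag_chain (CT C a) (ut a).+1) /\
  (forall b, ~ has_diag_chain (CS C b) (us b).+1).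

End Defs.

(* unit lattice steps: east (0,1) or north (-1,0) *)
Definition lstep (x y : nat * nat) : bool :=
  ((y.1 == x.1) && (y.2 == x.2.+1)) || ((y.1.+1 == x.1) && (y.2 == x.2)).

(* P is a lattice path (list of its lattice points, from its SW endpoint sw
   to its NE endpoint ne) inside the grid [1,a] x [1,b] *)
Definition lattice_path (a b : nat) (P : seq (nat * nat)) (sw ne : nat * nat) : Prop :=
  exists rest, P = sw :: rest /\ last sw rest = ne /\ path lstep sw rest /\
    all (fun x => (1 <= x.1 <= a) && (1 <= x.2 <= b)) P.

Definition nonintersecting (u : nat) (P : nat -> seq (nat * nat)) : Prop :=
  forall p p' x, 1 <= p <= u -> 1 <= p' <= u -> p <> p' ->
    x \in P p -> x \in P p' -> False.

Section RoadMap.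
Variables (Q : bquiver)
  (ms : 'I_(nsrc Q) -> nat) (mt : 'I_(ntgt Q) -> nat)
  (us : 'I_(nsrc Q) -> nat) (ut : 'I_(ntgt Q) -> nat).

Definition road_map (H : 'I_(ntgt Q) -> nat -> seq (nat * nat))
                    (V : 'I_(nsrc Q) -> nat -> seq (nat * nat)) : Prop :=
  (forall a,
     (forall p, 1 <= p <= ut a ->
        lattice_path (aT mt a) (bT ms a) (H a p)
          (aT mt a - ut a + p, 1) (p, bT ms a)) /\
     nonintersecting (ut a) (H a)) /\
  (forall b,
     (forall q, 1 <= q <= us b ->
        lattice_path (aS mt b) (bS ms b) (V b q)
          (aS mt b, q) (1, bS ms b - us b + q)) /\
     nonintersecting (us b) (V b)).

(* H|_k : lattice points of H in the block of page k, in page-k coordinates;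
   here H is a path in A_{t(h_k)} (resp. A_{s(h_k)} for resS). *)
Definition resT (k : 'I_(narr Q)) (H : seq (nat * nat)) (x : nat * nat) : Prop :=
  (x.1, offT ms k + x.2) \in H /\ 1 <= x.1 <= mt (tgt k) /\ 1 <= x.2 <= ms (src k).
Definition resS (k : 'I_(narr Q)) (V : seq (nat * nat)) (x : nat * nat) : Prop :=
  (offS mt k + x.1, x.2) \in V /\ 1 <= x.1 <= mt (tgt k) /\ 1 <= x.2 <= ms (src k).

Definition covered (C : nat -> nat -> 'I_(narr Q) -> Prop)
    (H : 'I_(ntgt Q) -> nat -> seq (nat * nat))
    (V : 'I_(nsrc Q) -> nat -> seq (nat * nat)) : Prop :=
  forall k i j, C i j k ->
    (exists p, 1 <= p <= ut (tgt k) /\ resT k (H (tgt k) p) (i, j)) /\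
    (exists q, 1 <= q <= us (src k) /\ resS k (V (src k) q) (i, j)).

End RoadMap.

(* Main.v *)
Require Import Defs.
From Stdlib Require Import ClassicalEpsilon.
From mathcomp Require Import all_boot zify.
Set Implicit Arguments. Unset Strict Implicit. Unset Printing Implicit Defensive.

Definition srel (x y : nat * nat) : bool := (x.1 < y.1) && (x.2 < y.2).

Section DP.
Variables (a b u : nat) (d : nat -> nat -> bool).
Hypothesis hu : 0 < u.
Hypothesis hua : u <= a.
Hypothesis hub : u <= b.
Hypothesis hd : forall i j, d i j -> (1 <= i <= a) && (1 <= j <= b).
Hypothesis hch : forall c, sorted srel c -> (forall x, x \in c -> d x.1 x.2) -> size c != u.+1.

Definition delta i j : nat := d i j || ((1 <= i <= u) && (j == b - u + i)).

Fixpoint G (i : nat) (j : nat) {struct i} : nat := match i with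
| 0 => 0
| i'.+1 => (fix Gr (j : nat) : nat := match j with
   | 0 => i'.+1 - (a - u)
   | j'.+1 => maxn (maxn (G i' j'.+1) (Gr j')) (G i' j' + delta i'.+1 j'.+1)
   end) j
end.

Lemma delta_le1 i j : delta i j <= 1. Proof. by rewrite /delta; case: (_ || _). Qed.

Lemma G0 j : G 0 j = 0. Proof. by []. Qed.
Lemma Gi0 i : G i 0 = i - (a - u). Proof. by case: i. Qed.
Lemma GSS i j : G i.+1 j.+1 = maxn (maxn (G i j.+1) (G i.+1 j)) (G i j + delta i.+1 j.+1).
Proof. by []. Qed.

Lemma G_mono_i i j : G i j <= G i.+1 j.
Proof. case: j => [|j]; first by rewrite !Gi0; lia. rewrite GSS; lia. Qed.
Lemma G_mono_j i j : G i j <= G i j.+1.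
Proof. case: i => [|i]; first by []. rewrite GSS; lia. Qed.
Lemma G_mono i j i' j' : i <= i' -> j <= j' -> G i j <= G i' j'.
Proof.
move=> hi hj; apply: (@leq_trans (G i' j)).
  rewrite -(subnK hi); elim: (i' - i) => [|k IH] //=.
  by apply: leq_trans IH (G_mono_i _ _).
rewrite -(subnK hj); elim: (j' - j) => [|k IH] //=.
by apply: leq_trans IH (G_mono_j _ _).
Qed.

Lemma G_le_i i j : G i j <= i.
Proof.
elim: i j => [|i IH] j //; elim: j => [|j IHj]; first by rewrite Gi0; lia.
rewrite GSS; have := IH j; have := IH j.+1; have := delta_le1 i.+1 j.+1; lia.
Qed.

Lemma G_step i j : G i.+1 j.+1 <= G i j + 1.
Proof.
elim: i j => [|i IH] j.
  by have := G_le_i 1 j.+1; rewrite G0.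
rewrite GSS; have := IH j; have := G_mono_i i j; have := delta_le1 i.+2 j.+1.
suff : G i.+2 j <= G i.+1 j + 1 by lia.
elim: j => [|j IHj]; first by rewrite !Gi0; lia.
rewrite GSS; have := G_mono_j i.+1 j; have := delta_le1 i.+2 j.+1; lia.
Qed.

Lemma delta_Z p j : 1 <= p <= u -> j = b - u + p -> delta p j = 1.
Proof. by move=> hp ->; rewrite /delta hp eqxx orbT. Qed.

Lemma G_Z p : 1 <= p <= u -> p <= G p (b - u + p).
Proof.
elim: p => [|p IH] // hp.
have -> : b - u + p.+1 = (b - u + p).+1 by lia.
rewrite GSS (@delta_Z p.+1) //; last by lia.
case: p IH hp => [|p] IH hp; first by lia.
have := IH ltac:(lia); lia.
Qed.

Lemma G_D i j : d i j -> G (i.-1) (j.-1) + 1 <= G i j.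
Proof.
move=> hij; have := hd hij; case: i hij => [|i] hij; first by [].
case: j hij => [|j] hij; first by lia.
by rewrite GSS /delta hij /=; lia.
Qed.

Fixpoint Kf (n : nat) (m : nat) {struct n} : nat := match n with
| 0 => 0
| n'.+1 => (fix Kr (m : nat) : nat := match m with
   | 0 => 0
   | m'.+1 => maxn (maxn (Kf n' m'.+1) (Kr m')) (Kf n' m' + d (a - n') (b - m'))
   end) m
end.

Lemma K0 m : Kf 0 m = 0. Proof. by []. Qed.
Lemma Kn0 n : Kf n 0 = 0. Proof. by case: n. Qed.
Lemma KSS n m : Kf n.+1 m.+1 = maxn (maxn (Kf n m.+1) (Kf n.+1 m)) (Kf n m + d (a - n) (b - m)).
Proof. by []. Qed.
Lemma d_le1 i j : (d i j : nat) <= 1. Proof. by case: (d i j). Qed.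

Lemma K_mono_n n m : Kf n m <= Kf n.+1 m.
Proof. case: m => [|m]; first by rewrite !Kn0. rewrite KSS; lia. Qed.
Lemma K_mono_m n m : Kf n m <= Kf n m.+1.
Proof. case: n => [|n]; first by []. rewrite KSS; lia. Qed.
Lemma K_mono n m n' m' : n <= n' -> m <= m' -> Kf n m <= Kf n' m'.
Proof.
move=> hi hj; apply: (@leq_trans (Kf n' m)).
  rewrite -(subnK hi); elim: (n' - n) => [|k IH] //=.
  by apply: leq_trans IH (K_mono_n _ _).
rewrite -(subnK hj); elim: (m' - m) => [|k IH] //=.
by apply: leq_trans IH (K_mono_m _ _).
Qed.

Lemma K_le_n n m : Kf n m <= n.
Proof.
elim: n m => [|n IH] m //; elim: m => [|m IHm]; first by rewrite Kn0.
rewrite KSS; have := IH m; have := IH m.+1; have := d_le1 (a - n) (b - m); lia.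
Qed.
Lemma K_le_m n m : Kf n m <= m.
Proof.
elim: n m => [|n IH] m //; elim: m => [|m IHm]; first by rewrite Kn0.
rewrite KSS; have := IH m; have := IH m.+1; have := d_le1 (a - n) (b - m); lia.
Qed.

Lemma K_chain n m k : k <= Kf n m -> exists c, size c = k /\ sorted srel c /\
  forall x, x \in c -> [/\ d x.1 x.2, a < x.1 + n & b < x.2 + m].
Proof.
elim: n m k => [|n IH] m k.
  by rewrite K0 leqn0 => /eqP ->; exists [::].
elim: m k => [|m IHm] k.
  by rewrite Kn0 leqn0 => /eqP ->; exists [::].
rewrite KSS !leq_max => /orP[/orP[]|].
- move=> /IH [c [hs [hc hx]]]; exists c; split=> //; split=> //; case=> x1 x2 /hx /= [? ? ?]; split=> //; lia.
- move=> /IHm [c [hs [hc hx]]]; exists c; split=> //; split=> //; case=> x1 x2 /hx /= [? ? ?]; split=> //; lia.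
case hdd : (d (a - n) (b - m)) => /=; last first.
  rewrite addn0 => /IH [c [hs [hc hx]]]; exists c; split=> //; split=> //; case=> x1 x2 /hx /= [? ? ?]; split=> //; lia.
case: k => [|k]; first by exists [::].
rewrite addn1 ltnS => /IH [c [hs [hc hx]]].
have := hd hdd => hb.
exists ((a - n, b - m) :: c); split; first by rewrite /= hs.
split.
  case: c hs hc hx => [|y c] hs hc hx //=.
  apply/andP; split; last exact: hc.
  case: y hs hc hx => y1 y2 hs hc hx; have [_ /= h1 h2] := hx _ (mem_head _ _).
  rewrite /srel /=; apply/andP; split; lia.
case=> x1 x2; rewrite inE => /orP[/eqP [-> ->] /=|/hx /= [? ? ?]]; split=> //; lia.
Qed.

Lemma K_le_u n m : Kf n m <= u.
Proof.
rewrite leqNgt; apply/negP => /K_chain [c [hs [hc hx]]].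
by have := hch hc (fun x hx' => let: And3 h _ _ := hx x hx' in h); rewrite hs eqxx.
Qed.

Lemma invariant i j : i <= a -> j <= b -> G i j + Kf (a - i) (b - j) <= u.
Proof.
elim: i j => [|i IH] j hi hj; first by rewrite G0 K_le_u.
elim: j hj => [|j IHj] hj.
  rewrite Gi0; have := K_le_n (a - i.+1) (b - 0); have := K_le_u (a - i.+1) (b - 0); lia.
set K := Kf (a - i.+1) (b - j.+1).
have f1 : G i j.+1 + K <= u.
  have := IH j.+1 ltac:(lia) hj; have := K_mono_n (a - i.+1) (b - j.+1).
  have -> : (a - i.+1).+1 = a - i by lia. rewrite -/K. lia.
have f2 : G i.+1 j + K <= u.
  have := IHj ltac:(lia); have := K_mono_m (a - i.+1) (b - j.+1).
  have -> : (b - j.+1).+1 = b - j by lia. rewrite -/K. lia.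
suff f3 : G i j + delta i.+1 j.+1 + K <= u by rewrite GSS; lia.
rewrite /delta; case hdd : (d i.+1 j.+1) => /=.
  have := IH j ltac:(lia) ltac:(lia).
  have e1 : a - i = (a - i.+1).+1 by lia.
  have e2 : b - j = (b - j.+1).+1 by lia.
  rewrite e1 e2 KSS.
  have -> : a - (a - i.+1) = i.+1 by lia.
  have -> : b - (b - j.+1) = j.+1 by lia.
  rewrite hdd -/K; lia.
case hz : ((1 <= i.+1 <= u) && (j.+1 == b - u + i.+1)) => /=.
  move: hz => /andP[h1 /eqP h2].
  have := G_le_i i j; have := K_le_m (a - i.+1) (b - j.+1); rewrite -/K; lia.
have := IH j ltac:(lia) ltac:(lia); have := @K_mono (a - i.+1) (b - j.+1) (a - i) (b - j) ltac:(lia) ltac:(lia).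
rewrite -/K; lia.
Qed.

Lemma G_le_u i j : i <= a -> j <= b -> G i j <= u.
Proof. move=> hi hj; have := invariant hi hj; lia. Qed.

Definition t p j := find (fun i => p <= G i j) (iota 0 a.+1).

Lemma t_le p j i : p <= G i j -> i <= a -> t p j <= i.
Proof.
move=> hp hi; rewrite leqNgt; apply/negP => /(before_find 0).
by rewrite nth_iota // add0n hp.
Qed.

Lemma t_lt p j i : i < t p j -> G i j < p.
Proof.
move=> hi; have hs : i < a.+1.
  by apply: leq_trans hi _; rewrite -(size_iota 0 a.+1) find_size.
have := before_find 0 hi; rewrite nth_iota // add0n => /negbT; by rewrite -ltnNge.
Qed.

Lemma t_spec p j : p <= u -> p <= G (t p j) j /\ t p j <= a - u + p.
Proof.
move=> hp; have hG : p <= G (a - u + p) j.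
  by apply: leq_trans (G_mono (leqnn _) (leq0n j)); rewrite Gi0; lia.
have hh : has (fun i => p <= G i j) (iota 0 a.+1).
  by apply/hasP; exists (a - u + p) => //; rewrite mem_iota; lia.
split; last by apply: t_le => //; lia.
have ht : t p j < a.+1 by move: (hh); rewrite has_find size_iota.
by have := nth_find 0 hh; rewrite -/(t p j) nth_iota // ?add0n.
Qed.

Lemma t_ge p j : p <= u -> p <= t p j.
Proof. by move=> hp; have [h _] := t_spec j hp; apply: leq_trans h (G_le_i _ _). Qed.

Lemma t_0 p : 1 <= p <= u -> t p 0 = a - u + p.
Proof.
move=> hp; have [h1 h2] := t_spec 0 (proj2 (andP hp)); rewrite Gi0 in h1; lia.
Qed.

Lemma t_b p : 1 <= p <= u -> t p b = p.
Proof.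
move=> hp; apply/eqP; rewrite eqn_leq t_ge ?andbT; last by case/andP: hp.
apply: t_le; last by lia.
apply: leq_trans (G_Z hp) (G_mono (leqnn _) _); lia.
Qed.

Lemma t_mono p j : p <= u -> t p j.+1 <= t p j.
Proof.
move=> hp; have [h1 h2] := t_spec j hp; apply: t_le; last by lia.
exact: leq_trans h1 (G_mono_j _ _).
Qed.

Lemma t_sep p j : p < u -> t p j < t p.+1 j.+1.
Proof.
move=> hp; have [h1 h2] := t_spec j.+1 hp.
case e : (t p.+1 j.+1) h1 h2 => [|s] h1 h2; first by rewrite G0 in h1.
rewrite ltnS; apply: t_le; last by lia.
have := G_step s j; lia.
Qed.

Lemma t_bounds p j : 1 <= p <= u -> 1 <= t p j <= a.
Proof.
move=> hp; have := t_ge j (proj2 (andP hp)); have [_ h2] := t_spec j (proj2 (andP hp)); lia.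
Qed.

Lemma t_cover i j : d i j -> exists p, 1 <= p <= u /\ t p j <= i <= t p j.-1.
Proof.
move=> hij; have hb := hd hij; have hD := G_D hij.
have hu' := @G_le_u i j ltac:(lia) ltac:(lia).
exists (G i j); split; first by lia.
apply/andP; split; first by apply: t_le => //; lia.
rewrite leqNgt; apply/negP => hlt.
have [h1 _] := t_spec j.-1 hu'.
have := @G_mono (t (G i j) j.-1) j.-1 i.-1 j.-1 ltac:(lia) (leqnn _).
lia.
Qed.

End DP.

Fixpoint vseg (hi n j : nat) : seq (nat * nat) := match n with
 | 0 => [:: (hi, j)] | n'.+1 => (hi, j) :: vseg hi.-1 n' j end.

Lemma vseg_mem hi n j x : n <= hi -> (x \in vseg hi n j) = (x.2 == j) && (hi - n <= x.1 <= hi).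
Proof.
case: x => x1 x2 /=; elim: n hi => [|n IH] hi hn /=.
  rewrite inE xpair_eqE; lia.
rewrite inE IH; last by lia.
rewrite xpair_eqE; lia.
Qed.

Lemma vseg_path x hi n j : n < hi -> lstep x (hi, j) -> path lstep x (vseg hi n j).
Proof.
elim: n hi x => [|n IH] hi x hn hx /=; first by rewrite hx.
rewrite hx /=; apply: IH; first by lia.
rewrite /lstep /= eqxx /=; apply/orP; right; apply/eqP; lia.
Qed.

Lemma vseg_last x hi n j : last x (vseg hi n j) = (hi - n, j).
Proof. by elim: n hi x => [|n IH] hi x /=; [rewrite subn0 | rewrite IH; congr pair; lia]. Qed.

Fixpoint cols (t : nat -> nat) (j k : nat) : seq (nat * nat) := match k with
 | 0 => [::] | k'.+1 => vseg (t j.-1) (t j.-1 - t j) j ++ cols t j.+1 k' end.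

Section Cols.
Variables (A b : nat) (t : nat -> nat).
Hypothesis tpos : forall c, c <= b -> 1 <= t c <= A.
Hypothesis tmono : forall c, c < b -> t c.+1 <= t c.

Lemma cols_mem j k x : 1 <= j -> j + k <= b.+1 ->
  (x \in cols t j k) = (j <= x.2 < j + k) && (t x.2 <= x.1 <= t x.2.-1).
Proof.
case: x => x1 x2 /=; elim: k j => [|k IH] j hj hk /=.
  by rewrite in_nil; symmetry; apply/negP => /andP[/andP[h1 h2] _]; lia.
have h1 : t j <= t j.-1 by have := tmono (c:=j.-1) ltac:(lia); rewrite (prednK hj).
rewrite mem_cat IH; [|lia|lia]; rewrite vseg_mem /=; last by lia.
have [->|ne] := eqVneq x2 j; lia.
Qed.

Lemma cols_path x j k : 1 <= j -> j + k <= b.+1 -> lstep x (t j.-1, j) -> path lstep x (cols t j k).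
Proof.
elim: k j x => [|k IH] j x hj hk hx //=.
rewrite cat_path; apply/andP; split.
  apply: vseg_path => //; have := tpos (c:=j) ltac:(lia); have := tpos (c:=j.-1) ltac:(lia); lia.
have h1 : t j <= t j.-1 by have := tmono (c:=j.-1) ltac:(lia); rewrite (prednK hj).
rewrite vseg_last; apply: IH; [lia|lia|].
rewrite /lstep /=; lia.
Qed.

Lemma cols_last x j k : 1 <= j -> j + k.+1 <= b.+1 -> last x (cols t j k.+1) = (t (j + k), j + k).
Proof.
elim: k j x => [|k IH] j x hj hk.
  rewrite /= cats0 vseg_last addn0; congr pair.
  have h1 : t j <= t j.-1 by have := tmono (c:=j.-1) ltac:(lia); rewrite (prednK hj).
  lia.
rewrite [cols _ _ _]/= last_cat IH; [|lia|lia]; by rewrite addSnnS.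
Qed.

Lemma cols_lattice : 1 <= b -> lattice_path A b (cols t 1 b) (t 0, 1) (t b, b).
Proof.
move=> hb; case eb : b hb => [|b'] // _.
set P := cols t 1 b'.+1.
have hP : P = (t 0, 1) :: behead P.
  rewrite /P /=; by case: (t 0 - t 1).
exists (behead P); split => //; split.
  have := cols_last (t 0, 1) (j:=1) (k:=b') (leqnn _) ltac:(lia).
  rewrite -/P {1}hP /= add1n => ->; by [].
split.
  have := @cols_path (t 0, 0) 1 b'.+1 (leqnn _) ltac:(lia).
  rewrite -/P {1}hP /= => h.
  have hl : lstep (t 0, 0) (t 0, 1) by rewrite /lstep /= !eqxx.
  by have /andP[_ //] := h hl.
apply/allP => -[x1 x2] hx; rewrite cols_mem // in hx; last by lia.
move: hx => /= /andP[/andP[h1 h2] /andP[h3 h4]].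
have := tpos (c:=x2) ltac:(lia); have := tpos (c:=x2.-1) ltac:(lia); lia.
Qed.

End Cols.

Definition dec (P : Prop) : bool := if excluded_middle_informative P then true else false.
Lemma decP (P : Prop) : dec P <-> P.
Proof. by rewrite /dec; case: excluded_middle_informative. Qed.

Lemma AbsH a b u (D : nat * nat -> Prop) : 0 < u -> u <= a -> u <= b ->
  (forall x, D x -> 1 <= x.1 <= a /\ 1 <= x.2 <= b) -> ~ has_diag_chain D u.+1 ->
  exists H : nat -> seq (nat * nat),
    (forall p, 1 <= p <= u -> lattice_path a b (H p) (a - u + p, 1) (p, b)) /\
    nonintersecting u H /\ forall x, D x -> exists p, 1 <= p <= u /\ x \in H p.
Proof.
move=> hu hua hub hD hnc.
pose d i j := dec (D (i, j)).
have hd : forall i j, d i j -> (1 <= i <= a) && (1 <= j <= b).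
  by move=> i j /decP /hD /= [-> ->].
have hch : forall c, sorted srel c -> (forall x, x \in c -> d x.1 x.2) -> size c != u.+1.
  move=> c hc hx; apply/negP => /eqP hs; apply: hnc; exists c; split => //; split => //.
  by case=> x1 x2 /hx /decP.
pose tt p := t a b u d p.
have tpos p : 1 <= p <= u -> forall c, c <= b -> 1 <= tt p c <= a.
  by move=> hp c _; apply: t_bounds.
have tmono p : 1 <= p <= u -> forall c, c < b -> tt p c.+1 <= tt p c.
  by move=> hp c _; apply: t_mono => //; case/andP: hp.
have hb : 1 <= b by lia.
have sepg : forall p p' c, 1 <= p -> p < p' -> p' <= u -> c < b -> tt p c < tt p' c.+1.
  move=> p p' c hp; elim: p' => [|p' IH] // hpp hp' hc.
  have hs : tt p' c < tt p'.+1 c.+1 := t_sep d hu hua hub c hp'.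
  have [e|lt] := eqVneq p p'; first by rewrite e.
  apply: leq_ltn_trans hs; apply: leq_trans (ltnW (IH ltac:(lia) ltac:(lia) hc)) _.
  exact: (tmono p' ltac:(lia) c hc).
exists (fun p => cols (tt p) 1 b); split.
  move=> p hp; have := cols_lattice (tpos p hp) (tmono p hp) hb.
  by rewrite /tt t_0 // t_b.
split.
  move=> p p' [x1 x2] hp hp' ne.
  rewrite (cols_mem (tmono p hp)) ?(cols_mem (tmono p' hp')) //; try lia.
  move=> /= /andP[h1 h2] /andP[h3 h4].
  have [lt|gt] : p < p' \/ p' < p by lia.
    have := sepg p p' x2.-1 ltac:(lia) lt ltac:(lia) ltac:(lia); rewrite (prednK (n:=x2)); lia.
  have := sepg p' p x2.-1 ltac:(lia) gt ltac:(lia) ltac:(lia); rewrite (prednK (n:=x2)); lia.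
case=> x1 x2 Dx; have hdx : d x1 x2 by apply/decP.
have [p [hp hpp]] := t_cover hu hua hub hd hch hdx.
exists p; split => //; rewrite (cols_mem (tmono p hp)) //; try lia.
have := hD _ Dx => /= ?; rewrite /tt; lia.
Qed.

Definition flip (A B : nat) (x : nat * nat) : nat * nat := (B.+1 - x.2, A.+1 - x.1).
Definition ingrid (A B : nat) (x : nat * nat) : bool := (1 <= x.1 <= A) && (1 <= x.2 <= B).

Lemma flip_step A B x y : ingrid A B x -> ingrid A B y -> lstep x y -> lstep (flip A B x) (flip A B y).
Proof. case: x => x1 x2; case: y => y1 y2; rewrite /ingrid /lstep /flip /=; lia. Qed.

Lemma flip_path A B x s : all (ingrid A B) (x :: s) -> path lstep x s ->
  path lstep (flip A B x) (map (flip A B) s).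
Proof.
elim: s x => [|y s IH] x //= /and3P[hx hy hs] /andP[hxy hp].
rewrite flip_step //=; apply: IH => //; by rewrite /= hy hs.
Qed.

Lemma flip_lattice A B P sw ne : lattice_path A B P sw ne ->
  lattice_path B A (map (flip A B) P) (flip A B sw) (flip A B ne).
Proof.
case=> rest [-> [hl [hp ha]]]; exists (map (flip A B) rest); split => //; split.
  by rewrite last_map hl.
split; first by apply: flip_path => //; apply: sub_all ha => -[x1 x2].
apply/allP => y /mapP [[x1 x2] hx ->]; have := allP ha _ hx; rewrite /flip /=; lia.
Qed.

Lemma lattice_ingrid A B P sw ne x : lattice_path A B P sw ne -> x \in P -> ingrid A B x.
Proof. by case=> rest [-> [_ [_ ha]]] hx; have := allP ha _ hx; case: x {hx}. Qed.

Lemma AbsV a b u (D : nat * nat -> Prop) : 0 < u -> u <= a -> u <= b ->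
  (forall x, D x -> 1 <= x.1 <= a /\ 1 <= x.2 <= b) -> ~ has_diag_chain D u.+1 ->
  exists V : nat -> seq (nat * nat),
    (forall q, 1 <= q <= u -> lattice_path a b (V q) (a, q) (1, b - u + q)) /\
    nonintersecting u V /\ forall x, D x -> exists q, 1 <= q <= u /\ x \in V q.
Proof.
move=> hu hua hub hD hnc.
pose D' := fun y => ingrid b a y /\ D (flip b a y).
have hD' : forall y, D' y -> 1 <= y.1 <= b /\ 1 <= y.2 <= a.
  by case=> y1 y2 [] /=; rewrite /ingrid /=; lia.
have hnc' : ~ has_diag_chain D' u.+1.
  case=> c [hs [hc hx]]; apply: hnc; exists (rev (map (flip b a) c)); split.
    by rewrite size_rev size_map.
  split; last by move=> y; rewrite mem_rev => /mapP [x /hx [_ hDx] ->].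
  rewrite rev_sorted sorted_map.
  apply: (@sub_in_sorted _ (ingrid b a)) hc.
    move=> [x1 x2] [y1 y2]; rewrite /ingrid /flip /relpre /srel /= => h1 h2; move: h1 h2; rewrite /in_mem /=; lia.
  by apply/allP => x /hx [].
have [H [hH [hni hcov]]] := AbsH hu hub hua hD' hnc'.
exists (fun q => map (flip b a) (H (u.+1 - q))); split.
  move=> q hq; have hp : 1 <= u.+1 - q <= u by lia.
  have := flip_lattice (hH _ hp).
  have -> : flip b a (b - u + (u.+1 - q), 1) = (a, q) by rewrite /flip /=; congr pair; lia.
  by have -> : flip b a (u.+1 - q, a) = (1, b - u + q) by rewrite /flip /=; congr pair; lia.
split.
  move=> q q' x hq hq' ne /mapP [y hy ->] /mapP [y' hy' e].
  have g1 := lattice_ingrid (hH (u.+1 - q) ltac:(lia)) hy.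
  have g2 := lattice_ingrid (hH (u.+1 - q') ltac:(lia)) hy'.
  have eyy : y = y'.
    move: g1 g2 e; case: y {hy} => y1 y2; case: y' {hy'} => y1' y2'.
    rewrite /ingrid /flip /= => g1 g2 [e1 e2]; congr pair; lia.
  subst y'; apply: (hni (u.+1 - q) (u.+1 - q') y) => //; lia.
case=> x1 x2 Dx; have := hD _ Dx => /= hb.
have hDx : D' (flip a b (x1, x2)).
  split; first by rewrite /ingrid /flip /=; lia.
  by rewrite /flip /=; have -> : (a.+1 - (a.+1 - x1), b.+1 - (b.+1 - x2)) = (x1, x2) by congr pair; lia.
have [p [hp hin]] := hcov _ hDx.
exists (u.+1 - p); split; first by lia.
have -> : u.+1 - (u.+1 - p) = p by lia.
apply/mapP; exists (flip a b (x1, x2)) => //.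
by rewrite /flip /=; congr pair; lia.
Qed.

Lemma offT_bound (Q : bquiver) (ms : 'I_(nsrc Q) -> nat) k :
  offT ms k + ms (src k) <= bT ms (tgt k).
Proof.
rewrite /offT /bT [X in _ <= X](bigID (fun k' : 'I_(narr Q) => k' < k)) /=.
rewrite [X in _ <= X + _](eq_bigl (fun k' : 'I_(narr Q) => (k' < k) && (tgt k' == tgt k))); last by move=> i; rewrite andbC.
rewrite leq_add2l (bigD1 k) /=; last by rewrite eqxx ltnn.
exact: leq_addr.
Qed.

Lemma offS_bound (Q : bquiver) (mt : 'I_(ntgt Q) -> nat) k :
  offS mt k + mt (tgt k) <= aS mt (src k).
Proof.
rewrite /offS /aS [X in _ <= X](bigID (fun k' : 'I_(narr Q) => k' < k)) /=.
rewrite [X in _ <= X + _](eq_bigl (fun k' : 'I_(narr Q) => (k' < k) && (src k' == src k))); last by move=> i; rewrite andbC.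
rewrite leq_add2l (bigD1 k) /=; last by rewrite eqxx ltnn.
exact: leq_addr.
Qed.

Lemma path_ne x s : path lstep x s -> forall z, z \in s -> z.1 <= x.1 /\ x.2 <= z.2.
Proof.
elim: s x => [|y s IH] x //= /andP[hxy hp] z; rewrite inE => /orP[/eqP ->|hz].
  by move: hxy; case: x => x1 x2; case: y {hp} => y1 y2; rewrite /lstep /=; lia.
have [h1 h2] := IH _ hp _ hz; move: hxy h1 h2; case: x => x1 x2; case: y {hp IH} => y1 y2.
case: z {hz} => z1 z2; rewrite /lstep /=; lia.
Qed.

Lemma path_cmp x s : path lstep x s -> forall y z, y \in x :: s -> z \in x :: s ->
  (z.1 <= y.1 /\ y.2 <= z.2) \/ (y.1 <= z.1 /\ z.2 <= y.2).
Proof.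
elim: s x => [|w s IH] x hp y z.
  by rewrite !inE => /eqP -> /eqP ->; left; lia.
have hne := path_ne hp.
move: (hp) => /= /andP[_ hp'].
rewrite inE => /orP[/eqP ->|hy]; rewrite inE => /orP[/eqP ->|hz].
- by left; lia.
- by left; apply: hne.
- by right; apply: hne.
- exact: (IH w hp' y z hy hz).
Qed.

Lemma nopair A B P sw ne y z : lattice_path A B P sw ne -> y \in P -> z \in P -> ~~ srel y z.
Proof.
case=> rest [-> [_ [hp _]]] hy hz; rewrite /srel.
have := path_cmp hp hy hz; case: y {hy}; case: z {hz} => z1 z2 y1 y2 /=; lia.
Qed.

Lemma srel_trans : transitive srel.
Proof. move=> [y1 y2] [x1 x2] [z1 z2]; rewrite /srel /=; lia. Qed.

Lemma php (P : nat -> seq (nat * nat)) m c : sorted srel c ->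
  (forall x, x \in c -> exists p, 1 <= p <= m /\ x \in P p) ->
  (forall p, 1 <= p <= m -> forall y z, y \in P p -> z \in P p -> ~~ srel y z) ->
  size c <= m.
Proof.
elim: m c => [|m IH] c hc hx hP.
  case: c hc hx => [|x c] // _ hx; have [p [hp _]] := hx x (mem_head _ _); lia.
rewrite -(count_predC (fun x => x \in P m.+1) c).
have h1 : count (fun x => x \in P m.+1) c <= 1.
  rewrite -size_filter; have := sorted_filter srel_trans (fun x => x \in P m.+1) hc.
  have hm : forall x, x \in [seq x <- c | x \in P m.+1] -> x \in P m.+1.
    by move=> x; rewrite mem_filter => /andP[].
  case: [seq x <- c | x \in P m.+1] hm => [|y [|z s]] hm //= /andP[hyz _].
  have := hP m.+1 ltac:(lia) y z (hm y (mem_head _ _)).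
  have hz : z \in P m.+1 by apply: hm; rewrite !inE eqxx orbT.
  by move=> /(_ hz); rewrite hyz.
have h2 : count (predC (fun x => x \in P m.+1)) c <= m.
  rewrite -size_filter; apply: IH.
  - exact: (sorted_filter srel_trans _ hc).
  - move=> x; rewrite mem_filter => /andP[hn /hx [p [hp hin]]].
    exists p; split => //; have : p != m.+1 by apply: contraNneq hn => <-.
    lia.
  - by move=> p hp; apply: hP; lia.
lia.
Qed.

Unset Implicit Arguments. Set Strict Implicit.

Theorem lemma2p8 (Q : bquiver)
  (ms : 'I_(nsrc Q) -> nat) (mt : 'I_(ntgt Q) -> nat)
  (us : 'I_(nsrc Q) -> nat) (ut : 'I_(ntgt Q) -> nat)
  (hT : forall a, 0 < ut a /\ ut a <= minn (aT mt a) (bT ms a) /\ ut a <= vT us a)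
  (hS : forall b, 0 < us b /\ us b <= minn (aS mt b) (bS ms b) /\ us b <= vS ut b)
  (C : nat -> nat -> 'I_(narr Q) -> Prop) (hC : subL ms mt C) :
  u_compatible ms mt us ut C <->
  exists H V, road_map ms mt us ut H V /\ covered ms mt us ut C H V.
Proof.
have gT : forall al x, CT ms mt C al x -> 1 <= x.1 <= aT mt al /\ 1 <= x.2 <= bT ms al.
  move=> al [x1 x2] [i [j [k [hc [ek [[h1 h2] [/= e1 e2]]]]]]].
  have := offT_bound ms k; rewrite /aT -ek; lia.
have gS : forall be x, CS ms mt C be x -> 1 <= x.1 <= aS mt be /\ 1 <= x.2 <= bS ms be.
  move=> be [x1 x2] [i [j [k [hc [ek [[h1 h2] [/= e1 e2]]]]]]].
  have := offS_bound mt k; rewrite /bS -ek; lia.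
split.
  case=> hcT hcS.
  have exH : forall al, exists H : nat -> seq (nat * nat),
    (forall p, 1 <= p <= ut al -> lattice_path (aT mt al) (bT ms al) (H p) (aT mt al - ut al + p, 1) (p, bT ms al)) /\
    nonintersecting (ut al) H /\ forall x, CT ms mt C al x -> exists p, 1 <= p <= ut al /\ x \in H p.
    move=> al; have [h1 [h2 _]] := hT al.
    apply: AbsH => //; try lia; try exact: gT; try exact: hcT.
  have exV : forall be, exists V : nat -> seq (nat * nat),
    (forall q, 1 <= q <= us be -> lattice_path (aS mt be) (bS ms be) (V q) (aS mt be, q) (1, bS ms be - us be + q)) /\
    nonintersecting (us be) V /\ forall x, CS ms mt C be x -> exists q, 1 <= q <= us be /\ x \in V q.
    move=> be; have [h1 [h2 _]] := hS be.
    apply: AbsV => //; try lia; try exact: gS; try exact: hcS.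
  pose H al := proj1_sig (constructive_indefinite_description _ (exH al)).
  pose V be := proj1_sig (constructive_indefinite_description _ (exV be)).
  have sH al := proj2_sig (constructive_indefinite_description _ (exH al)).
  have sV be := proj2_sig (constructive_indefinite_description _ (exV be)).
  exists H, V; split.
    split.
      by move=> al; have [h1 [h2 _]] := sH al; split.
    by move=> be; have [h1 [h2 _]] := sV be; split.
  move=> k i j hCij; have := hC i j k hCij; rewrite /in_page => -[hi hj].
  split.
    have hx : CT ms mt C (tgt k) (i, offT ms k + j).
      by exists i, j, k; split => //; split => //; split => //.
    have [_ [_ hcov]] := sH (tgt k); have [p [hp hin]] := hcov _ hx.
    by exists p; split => //; split.
  have hx : CS ms mt C (src k) (offS mt k + i, j).
    by exists i, j, k; split => //; split => //; split => //.
  have [_ [_ hcov]] := sV (src k); have [q [hq hin]] := hcov _ hx.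
  by exists q; split => //; split.
case=> H [V [[rT rS] cov]]; split.
  move=> al [c [hs [hc hx]]].
  suff : size c <= ut al by rewrite hs ltnn.
  apply: (php (P := H al)) => //.
    move=> [x1 x2] /hx [i [j [k [hCij [ek [_ [/= e1 e2]]]]]]].
    have [[p [hp [hin _]]] _] := cov k i j hCij.
    by exists p; rewrite -ek e1 e2; split.
  by move=> p hp y z; have [hl _] := rT al; apply: nopair (hl p hp).
move=> be [c [hs [hc hx]]].
suff : size c <= us be by rewrite hs ltnn.
apply: (php (P := V be)) => //.
  move=> [x1 x2] /hx [i [j [k [hCij [ek [_ [/= e1 e2]]]]]]].
  have [_ [q [hq [hin _]]]] := cov k i j hCij.
  by exists q; rewrite -ek e1 e2; split.
by move=> q hq y z; have [hl _] := rS be; apply: nopair (hl q hq).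
Qed.
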